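(* Let $S=\langle T,\Pi,C\rangle$ be a state space and let $(A_i,\psi_i)$, $1\le i\le k$, be abstractions of $S$ forming an additive abstraction system. Let $t,g\in T$ and let $\pi$ be a path from $t$ to $g$ in $S$ with $C(\pi)=\sum_{i=1}^k C^*_i(t_i,g_i)$. Then $R_i(\pi_i)\ge R^*_i(t_i,g_i)$ for all $i\in\{1,\dots,k\}$.
   Context: A state space is a weighted directed graph $S=\langle T,\Pi,C\rangle$ where $T$ is a finite set of states, $\Pi\subseteq T\times T$ is a set of directed edges, and $C:\Pi\to\mathbb{N}=\{0,1,2,\dots\}$. A path from $u$ to $v$ is a sequence of edges $\langle\pi^1,\dots,\pi^n\rangle$ with $\pi^j=(u^{j-1},u^j)\in\Pi$, $u^0=u$, $u^n=v$; its cost is $C(\pi)=\sum_j C(\pi^j)$. An abstract state space is $A_i=\langle T_i,\Pi_i,C_i,R_i\rangle$ with $T_i$ a set of abstract states, $\Pi_i\subseteq T_i\times T_i$, and edge weights $C_i,R_i:\Pi_i\to\mathbb{N}$ (primary and residual cost), extended additively to paths. An abstraction of $S$ is a pair $(A_i,\psi_i)$ with $\psi_i:T\to T_i$ such that (1) for every $(u,v)\in\Pi$, $(\psi_i(u),\psi_i(v))\in\Pi_i$, and (2) for every $\pi=(u,v)\in\Pi$, $C_i(\pi_i)+R_i(\pi_i)\le C(\pi)$ where $\pi_i=(\psi_i(u),\psi_i(v))$. The system is additive if for every $\pi\in\Pi$, $\sum_{i=1}^k C_i(\pi_i)\le C(\pi)$. Write $t_i=\psi_i(t)$, and for a path $\pi=\langle\pi^1,\dots,\pi^n\rangle$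 in $S$ let $\pi_i=\langle\pi^1_i,\dots,\pi^n_i\rangle$ be its edgewise image, a path in $A_i$. Define $C^*_i(x,y)=\min\{C_i(\rho):\rho\text{ a path from }x\text{ to }y\text{ in }A_i\}$; $P_i(x,y)$ is the set of paths $\rho$ from $x$ to $y$ in $A_i$ with $C_i(\rho)=C^*_i(x,y)$, and $R^*_i(x,y)=\min_{\rho\in P_i(x,y)}R_i(\rho)$. *)

(* Defs.v *)
From mathcomp Require Import all_boot.
From Stdlib Require Import ClassicalEpsilon.
Set Implicit Arguments. Unset Strict Implicit. Unset Printing Implicit Defensive.

(* A path starting at u is represented by the list p of states it visits after u:
   the edges are (u,p_1), (p_1,p_2), ...; it ends at [last u p].
   The empty list is the empty path from u to u. *)
Fixpoint is_path (V : Type) (E : V -> V -> Prop) (u : V) (p : seq V) : Prop :=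
  match p with
  | [::] => True
  | v :: p' => E u v /\ is_path E v p'
  end.

Fixpoint pcost (V : Type) (w : V -> V -> nat) (u : V) (p : seq V) : nat :=
  match p with
  | [::] => 0
  | v :: p' => w u v + pcost w v p'
  end.

Definition path_from_to (V : Type) (E : V -> V -> Prop) (x y : V) (p : seq V) :=
  is_path E x p /\ last x p = y.

Definition is_min_over (V : Type) (E : V -> V -> Prop) (x y : V)
    (Q : seq V -> Prop) (f : seq V -> nat) (m : nat) : Prop :=
  (exists p, path_from_to E x y p /\ Q p /\ f p = m) /\
  (forall p, path_from_to E x y p -> Q p -> m <= f p).

Definition Cstar (V : Type) (E : V -> V -> Prop) (c : V -> V -> nat) (x y : V) : nat :=
  epsilon (inhabits 0%N) (is_min_over E x y (fun _ => True) (pcost c x)).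

Definition Rstar (V : Type) (E : V -> V -> Prop) (c r : V -> V -> nat) (x y : V) : nat :=
  epsilon (inhabits 0%N)
    (is_min_over E x y (fun p => pcost c x p = Cstar E c x y) (pcost r x)).

(* Main.v *)
Require Import Defs.
From Stdlib Require Import ClassicalEpsilon Classical.
From mathcomp Require Import all_boot.

Lemma nat_min_ex (P : nat -> Prop) n : P n ->
  exists m, P m /\ forall m', P m' -> m <= m'.
Proof.
elim: n {-2}n (leqnn n) => [|N IH] n Hn Pn.
  exists n; split=> // m' _; move: Hn; rewrite leqn0 => /eqP ->.
  done.
destruct (classic (exists m, P m /\ m < n)) as [[m [Pm lt]]|H].
  apply: (IH m) => //; rewrite -ltnS; exact: leq_trans lt Hn.
exists n; split=> // m' Pm'; rewrite leqNgt; apply/negP => lt; apply H; eauto.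
Qed.

Lemma min_exists (V : Type) (E : V -> V -> Prop) x y Q f p :
  path_from_to E x y p -> Q p -> is_min_over E x y Q f
     (epsilon (inhabits 0%N) (is_min_over E x y Q f)).
Proof.
move=> Hp Qp; apply: epsilon_spec.
have [m [[q [H1 [H2 H3]]] Hm]] :=
  @nat_min_ex (fun m => exists q, path_from_to E x y q /\ Q q /\ f q = m) _
     (ex_intro _ p (conj Hp (conj Qp erefl))).
exists m; split; first by exists q.
move=> q' H1' H2'; apply: Hm; by exists q'.
Qed.

Lemma map_is_path (T V : Type) (E : T -> T -> Prop) (F : V -> V -> Prop) (h : T -> V)
  (H : forall u v, E u v -> F (h u) (h v)) u p :
  is_path E u p -> is_path F (h u) (map h p).
Proof. elim: p u => [|v p IH] u //= [] ? ?; split; auto. Qed.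

Lemma sum_pcost (T : Type) (Pi : T -> T -> Prop) (C : T -> T -> nat) k
  (Ti : 'I_k -> Type) (Ci : forall i, Ti i -> Ti i -> nat) (psi : forall i, T -> Ti i)
  (Hadd : forall u v, Pi u v -> \sum_(i < k) Ci i (psi i u) (psi i v) <= C u v) u p :
  is_path Pi u p ->
  \sum_(i < k) pcost (Ci i) (psi i u) (map (psi i) p) <= pcost C u p.
Proof.
elim: p u => [|v p IH] u /=.
  by move=> _; rewrite big1.
move=> [] Huv Hp; rewrite big_split /=; apply: leq_add; auto.
Qed.

Lemma sum_eq_le k (a b : 'I_k -> nat) i :
  (forall j, a j <= b j) -> \sum_j b j <= \sum_j a j -> b i = a i.
Proof.
move=> Hab Hs; apply/eqP; rewrite eqn_leq Hab andbT.
move: Hs; rewrite (bigD1 i) //= (bigD1 i (P:=predT)) //= => Hs.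
have : \sum_(j < k | j != i) a j <= \sum_(j < k | j != i) b j by apply: leq_sum.
move=> H2; rewrite -(leq_add2r (\sum_(j < k | j != i) b j)).
apply: leq_trans Hs _; by rewrite leq_add2l.
Qed.

Theorem lemma8
  (* state space S = <T, Pi, C> *)
  (T : finType) (Pi : T -> T -> Prop) (C : T -> T -> nat)
  (* k abstractions (A_i, psi_i), A_i = <T_i, Pi_i, C_i, R_i> *)
  (k : nat) (Ti : 'I_k -> Type)
  (Pii : forall i, Ti i -> Ti i -> Prop)
  (Ci Ri : forall i, Ti i -> Ti i -> nat)
  (psi : forall i, T -> Ti i)
  (* abstraction condition (1) *)
  (Habs1 : forall i u v, Pi u v -> Pii i (psi i u) (psi i v))
  (* abstraction condition (2) *)
  (Habs2 : forall i u v, Pi u v ->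
     Ci i (psi i u) (psi i v) + Ri i (psi i u) (psi i v) <= C u v)
  (* additivity *)
  (Hadd : forall u v, Pi u v -> \sum_(i < k) Ci i (psi i u) (psi i v) <= C u v)
  (t g : T) (p : seq T)
  (Hp : path_from_to Pi t g p)
  (Hcost : pcost C t p = \sum_(i < k) Cstar (Pii i) (Ci i) (psi i t) (psi i g)) :
  forall i : 'I_k,
    Rstar (Pii i) (Ci i) (Ri i) (psi i t) (psi i g)
      <= pcost (Ri i) (psi i t) (map (psi i) p).
Proof.
have Hpi : forall j, path_from_to (Pii j) (psi j t) (psi j g) (map (psi j) p).
  move=> j; case: Hp => H1 H2; split; first exact: (@map_is_path T (Ti j) Pi (Pii j) (psi j) (Habs1 j) t p H1).
  by rewrite last_map H2.
have Hle : forall j, Cstar (Pii j) (Ci j) (psi j t) (psi j g)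
                     <= pcost (Ci j) (psi j t) (map (psi j) p).
  move=> j; have [_ H] := @min_exists _ (Pii j) _ _ (fun _ => True)
                 (pcost (Ci j) (psi j t)) _ (Hpi j) I.
  exact: H (Hpi j) I.
move=> i.
have Heq : pcost (Ci i) (psi i t) (map (psi i) p) = Cstar (Pii i) (Ci i) (psi i t) (psi i g).
  apply: (@sum_eq_le k (fun j => Cstar (Pii j) (Ci j) (psi j t) (psi j g))
                    (fun j => pcost (Ci j) (psi j t) (map (psi j) p))) => //.
  rewrite -Hcost; apply: (@sum_pcost T Pi C k Ti Ci psi Hadd t p); by case: Hp.
have [_ H] := @min_exists _ (Pii i) _ _
   (fun q => pcost (Ci i) (psi i t) q = Cstar (Pii i) (Ci i) (psi i t) (psi i g))
   (pcost (Ri i) (psi i t)) _ (Hpi i) Heq.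
exact: H (Hpi i) Heq.
Qed.
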